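(* Let $M_{1/2} := \mathbb{N}_0[\frac12]$. A nonzero element $P(x) \in \mathbb{Q}[M_{1/2}]$ is irreducible in $\mathbb{Q}[M_{1/2}]$ if and only if $P(x^{2^n})$ is irreducible in $\mathbb{Q}[x]$ for every $n \in \mathbb{N}$ such that $P(x^{2^n}) \in \mathbb{Q}[x]$.
   Context: $\mathbb{Q}[M_{1/2}]$ is the domain of polynomial expressions $\sum c_i x^{m_i}$ with $c_i \in \mathbb{Q}$ and $m_i$ nonnegative dyadic rationals; $P(x^{2^n})$ denotes the expression obtained by replacing each $x^{m}$ by $x^{2^n m}$. *)

(* Defs.v *)
From mathcomp Require Import all_boot all_algebra.
Set Implicit Arguments. Unset Strict Implicit. Unset Printing Implicit Defensive.
Import GRing.Theory Num.Theory.
Local Open Scope ring_scope.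

(* Model of Q[M_{1/2}], M_{1/2} = N_0[1/2] (nonnegative dyadic rationals):
   a representative (k, p) with p : {poly rat} denotes the expression
   p(x^{1/2^k}).  Q[M_{1/2}] is the directed union of the Q[x^{1/2^k}],
   and the ring operations below are those of this union. *)
Definition dpoly := (nat * {poly rat})%type.

Definition stretch (m : nat) (p : {poly rat}) : {poly rat} := p \Po 'X^(2 ^ m).

(* equality of the denoted elements: p(x^{1/2^a}) = q(x^{1/2^b}) *)
Definition deq (P Q : dpoly) : Prop :=
  stretch Q.1 P.2 = stretch P.1 Q.2.

Definition dmul (P Q : dpoly) : dpoly :=
  ((P.1 + Q.1)%N, stretch Q.1 P.2 * stretch P.1 Q.2).

Definition done : dpoly := (0%N, 1).

Definition dnonzero (P : dpoly) : Prop := P.2 != 0.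

Definition dunit (P : dpoly) : Prop := exists Q, deq (dmul P Q) done.

Definition dirreducible (P : dpoly) : Prop :=
  dnonzero P /\ ~ dunit P /\
  forall Q R : dpoly, deq P (dmul Q R) -> dunit Q \/ dunit R.

Definition dsubst (n : nat) (P : dpoly) : dpoly := (P.1, stretch n P.2).

Definition ofpoly (q : {poly rat}) : dpoly := (0%N, q).

(* Main.v *)
Require Import Defs.
From mathcomp Require Import all_boot all_algebra.
From mathcomp Require Import zify.
Import GRing.Theory.
Local Open Scope ring_scope.

Lemma st0 p : stretch 0 p = p.
Proof. by rewrite /stretch expn0 expr1 comp_polyXr. Qed.

Lemma stM m f g : stretch m (f * g) = stretch m f * stretch m g.
Proof. by rewrite /stretch comp_polyM. Qed.

Lemma stC m c : stretch m c%:P = c%:P.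
Proof. by rewrite /stretch comp_polyC. Qed.

Lemma stst a b p : stretch a (stretch b p) = stretch (a + b) p.
Proof.
by rewrite /stretch -comp_polyA comp_Xn_poly -exprM -expnD addnC.
Qed.

Lemma st_size m p : (size (stretch m p)).-1 = ((size p).-1 * 2 ^ m)%N.
Proof. by rewrite /stretch size_comp_poly size_polyXn. Qed.

Lemma st_le1 m p : (size (stretch m p) <= 1)%N -> (size p <= 1)%N.
Proof.
move=> h; have := st_size m p.
have -> : (size (stretch m p)).-1 = 0%N by case: (size _) h => [|[]].
move/esym/eqP; rewrite muln_eq0 expn_eq0 /= orbF.
by case: (size p) => [|[]] //=; rewrite ?orbF.

Qed.

Lemma st_eq1 m p : size (stretch m p) = 1%N -> size p = 1%N.
Proof.
move=> h; have := st_le1 m p; rewrite h => /(_ isT).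
case: (size p =P 0%N) => [/eqP|]; last by case: (size p) => [|[]].
by rewrite size_poly_eq0 => /eqP z; move: h; rewrite z /stretch comp_poly0 size_poly0.
Qed.

Lemma dunitP a f : dunit (a, f) <-> size f = 1%N.
Proof.
split.
- case=> [[b g]]; rewrite /deq /dmul /done /= st0 stC.
  move=> h; rewrite ?polyC1 in h.
  have hu : stretch b f \in GRing.unit.
    by apply/unitrP; exists (stretch a g); rewrite mulrC h.
  move: hu; rewrite poly_unitE => /andP[/eqP s _].
  exact: st_eq1 s.
- move/eqP/size_poly1P => [c c0 ->].
  exists (0%N, c^-1%:P); rewrite /deq /dmul /done /= st0 !stC ?addn0.
  by rewrite -polyCM mulfV ?polyC1.
Qed.

Theorem lemma4p1 (P : dpoly) :
  dnonzero P ->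
  (dirreducible P <->
   forall (n : nat) (q : {poly rat}),
     deq (dsubst n P) (ofpoly q) -> irreducible_poly q).
Proof.
case: P => k p; rewrite /dnonzero /= => p0.
split.
- case=> _ [nu irr] n q; rewrite /deq /dsubst /ofpoly /= st0 => e.
  split.
  + rewrite ltnNge; apply/negP => hq.
    apply: nu; apply/dunitP.
    have : (size (stretch n p) <= 1)%N.
      by rewrite e (size1_polyC hq) stC size_polyC leq_b1.
    move/st_le1; rewrite -size_poly_eq0 in p0.
    by case: (size p) p0 => [|[]].
  + move=> d sd /dvdpP [g hq].
    have := irr (n, d) (n, g).
    rewrite /deq /dmul /= -stM mulrC -hq stst (addnC k n) -(stst n k q) -e stst => /(_ erefl).
    case=> /dunitP h; first by rewrite h in sd.
    move/eqP/size_poly1P: h => [c c0 hg].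
    by rewrite hq hg mul_polyC eqp_sym eqp_scale.
- move=> H; split => //; split.
  + move/dunitP => s.
    have := H k p; rewrite /deq /= st0 => /(_ erefl) [].
    by rewrite s.
  + move=> [a f] [b g]; rewrite /deq /dmul /= => e.
    have := H (a + b)%N (stretch b f * stretch a g).
    rewrite /deq /dsubst /ofpoly /= st0 => /(_ e) [sq irr].
    have q0 : stretch b f * stretch a g != 0 by rewrite -size_poly_gt0 ltnW.
    move: (q0); rewrite mulf_eq0 negb_or => /andP[f0 g0].
    case: (size (stretch b f) =P 1%N) => [/st_eq1 h|sf].
      by left; apply/dunitP.
    right; apply/dunitP; apply: (st_eq1 a).
    have := irr (stretch b f) (introT negP (fun x => sf (eqP x))) (dvdp_mulr _ (dvdpp _)).
    move/eqp_size; rewrite size_mul // => hs.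
    move: hs f0 g0; rewrite -!size_poly_eq0.
    case: (size (stretch b f)) => // x; case: (size (stretch a g)) => // y hs _ _.
    lia.
Qed.
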